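(* Let $\Re$ be a commutative Krasner hyperring with identity $1\ne0$, let $\phi:L(\Re)\to L(\Re)\cup\{\emptyset\}$ be a function, and let $T$ be a proper hyperideal of $\Re$ with $\phi(T)\subseteq T$ such that $T$ is $\phi$-prime but not prime. Then $T\circ\sqrt{\phi(T)}\subseteq\phi(T)$, i.e. $t\circ a\in\phi(T)$ for all $t\in T$ and $a\in\sqrt{\phi(T)}$.
   Context: Krasner hyperring: $(\Re,\oplus)$ canonical hypergroup, $(\Re,\circ)$ commutative semigroup with identity $1\ne0$, $0$ absorbing, distributive. Hyperideals and $L(\Re)$ as usual. $\sqrt{I}=\{x: x^n\in I \text{ for some } n\ge1\}$ ($\sqrt{\emptyset}=\emptyset$). $T$ is prime if $a\circ b\in T\Rightarrow a\in T$ or $b\in T$; $T$ is $\phi$-prime if $a\circ b\in T$, $a\circ b\notin\phi(T)$ imply $a\in T$ or $b\in T$. *)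

(* Defs.v *)
Set Implicit Arguments.

(* A commutative Krasner hyperring with identity 1 <> 0.
   Subsets of the carrier are predicates [R -> Prop];
   [hplus x y z] means  z ∈ x ⊕ y. *)
Record KrasnerHyperring := {
  carrier :> Type;
  hplus : carrier -> carrier -> carrier -> Prop;
  hmul : carrier -> carrier -> carrier;
  hzero : carrier;
  hone : carrier;
  hopp : carrier -> carrier;
  hplus_nonempty : forall x y, exists z, hplus x y z;
  hplus_comm : forall x y z, hplus x y z -> hplus y x z;
  hplus_assoc : forall x y z w,
    (exists u, hplus x y u /\ hplus u z w) <-> (exists v, hplus y z v /\ hplus x v w);
  hplus_zero : forall x z, hplus hzero x z <-> z = x;
  hplus_opp : forall x, hplus x (hopp x) hzero;
  hplus_opp_unique : forall x y, hplus x y hzero -> y = hopp x;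
  hplus_reversible_l : forall x y z, hplus x y z -> hplus z (hopp y) x;
  hplus_reversible_r : forall x y z, hplus x y z -> hplus (hopp x) z y;
  hmul_assoc : forall x y z, hmul x (hmul y z) = hmul (hmul x y) z;
  hmul_comm : forall x y, hmul x y = hmul y x;
  hmul_one : forall x, hmul hone x = x;
  hone_neq_zero : hone <> hzero;
  hmul_zero : forall x, hmul hzero x = hzero;
  hmul_distr : forall x y z w,
    (exists u, hplus x y u /\ w = hmul z u) <-> hplus (hmul z x) (hmul z y) w
}.

Section Defs.
Context {R : KrasnerHyperring}.

Definition hyperideal (I : R -> Prop) : Prop :=
  (exists x, I x) /\
  (forall a b c, I a -> I b -> hplus R a (hopp R b) c -> I c) /\
  (forall r a, I a -> I (hmul R r a)).

Definition proper (I : R -> Prop) : Prop := exists x, ~ I x.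

Definition empty_set (I : R -> Prop) : Prop := forall x, ~ I x.

Definition subset (A B : R -> Prop) : Prop := forall x, A x -> B x.

Fixpoint hpow (x : R) (n : nat) : R :=
  match n with O => hone R | S m => hmul R x (hpow x m) end.

(* sqrt I = { x : x^n ∈ I for some n >= 1 }; sqrt ∅ = ∅ automatically *)
Definition hrad (I : R -> Prop) (x : R) : Prop :=
  exists n, 1 <= n /\ I (hpow x n).

(* φ : L(R) -> L(R) ∪ {∅}, represented by a function on subsets whose
   values on hyperideals are hyperideals or empty *)
Definition phi_map (phi : (R -> Prop) -> (R -> Prop)) : Prop :=
  forall I, hyperideal I -> hyperideal (phi I) \/ empty_set (phi I).

Definition prime_hi (T : R -> Prop) : Prop :=
  forall a b, T (hmul R a b) -> T a \/ T b.

Definition phi_prime (phi : (R -> Prop) -> (R -> Prop)) (T : R -> Prop) : Prop :=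
  forall a b, T (hmul R a b) -> ~ phi T (hmul R a b) -> T a \/ T b.
End Defs.

(* Main.v *)
Require Import Defs.
From Stdlib Require Import Classical.
Set Implicit Arguments.

Section H.
Context {R : KrasnerHyperring}.

Lemma id_zero (I : R -> Prop) : hyperideal I -> I (hzero R).
Proof.
  intros [[x Hx] [_ Hm]]. rewrite <- (hmul_zero R x). apply Hm; auto.
Qed.

Lemma id_opp (I : R -> Prop) : hyperideal I -> forall b, I b -> I (hopp R b).
Proof.
  intros HI b Hb. pose proof (id_zero HI) as Z. destruct HI as [H0 [Hs Hm]].
  apply (Hs (hzero R) b); auto.
  apply hplus_zero; reflexivity.
Qed.

Lemma opp_opp (b : R) : hopp R (hopp R b) = b.
Proof.
  symmetry. apply hplus_opp_unique. apply hplus_comm. apply hplus_opp.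
Qed.

Lemma id_add (I : R -> Prop) : hyperideal I -> forall p q c,
  hplus R p q c -> I p -> I q -> I c.
Proof.
  intros HI p q c Hc Hp Hq. pose proof HI as [_ [Hs _]].
  apply (Hs p (hopp R q)); auto. apply id_opp; auto.
  rewrite opp_opp; auto.
Qed.

Lemma id_canc (I : R -> Prop) : hyperideal I -> forall p q c,
  hplus R p q c -> I p -> I c -> I q.
Proof.
  intros HI p q c Hc Hp Hcc. apply (id_add HI (hopp R p) c q).
  apply hplus_reversible_r; auto. apply id_opp; auto. auto.
Qed.

Lemma id_mul (I : R -> Prop) : hyperideal I -> forall r a, I a -> I (hmul R r a).
Proof. intros [_ [_ H]]; auto. Qed.

Lemma id_mulr (I : R -> Prop) : hyperideal I -> forall r a, I a -> I (hmul R a r).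
Proof. intros HI r a Ha. rewrite hmul_comm. apply id_mul; auto. Qed.

Variable phi : (R -> Prop) -> (R -> Prop).
Variable T : R -> Prop.
Hypothesis hphi : phi_map phi.
Hypothesis hT : hyperideal T.
Hypothesis hpr : phi_prime phi T.

Lemma phiT_id a b : phi T (hmul R a b) -> hyperideal (phi T).
Proof.
  intros H. destruct (hphi hT) as [h|h]; auto. exfalso; eapply h; eauto.
Qed.

Lemma lemA a b : T (hmul R a b) -> ~ T a -> ~ T b ->
  phi T (hmul R a b) /\ forall x, T x -> phi T (hmul R a x).
Proof.
  intros Hab Ha Hb.
  assert (Hf : phi T (hmul R a b)).
  { apply NNPP; intro N. destruct (hpr _ _ Hab N); tauto. }
  split; auto. pose proof (phiT_id _ _ Hf) as Hp.
  intros x Hx. apply NNPP; intro N.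
  destruct (hplus_nonempty R b x) as [u Hu].
  assert (Hau : hplus R (hmul R a b) (hmul R a x) (hmul R a u)).
  { apply hmul_distr. exists u; auto. }
  assert (HTu : T (hmul R a u)).
  { eapply id_add; eauto. apply id_mul; auto. }
  assert (Nu : ~ phi T (hmul R a u)).
  { intro Hu'. apply N. eapply id_canc; eauto. }
  destruct (hpr _ _ HTu Nu) as [h|h]; [tauto|].
  apply Hb. apply (id_canc hT x b u); auto. apply hplus_comm; auto.
Qed.

Lemma sq a b : T (hmul R a b) -> ~ T a -> ~ T b ->
  forall x y, T x -> T y -> phi T (hmul R x y).
Proof.
  intros Hab Ha Hb x y Hx Hy.
  destruct (lemA Hab Ha Hb) as [Hf Ha'].
  assert (Hba : T (hmul R b a)) by (rewrite hmul_comm; auto).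
  destruct (lemA Hba Hb Ha) as [_ Hb'].
  pose proof (phiT_id _ _ Hf) as Hp.
  apply NNPP; intro N.
  destruct (hplus_nonempty R a x) as [u Hu].
  destruct (hplus_nonempty R b y) as [v Hv].
  assert (Hub : hplus R (hmul R a b) (hmul R x b) (hmul R u b)).
  { rewrite !(hmul_comm R _ b). apply hmul_distr. exists u; auto. }
  assert (Huy : hplus R (hmul R a y) (hmul R x y) (hmul R u y)).
  { rewrite !(hmul_comm R _ y). apply hmul_distr. exists u; auto. }
  assert (Huv : hplus R (hmul R u b) (hmul R u y) (hmul R u v)).
  { apply hmul_distr. exists v; auto. }
  assert (Tub : T (hmul R u b)).
  { eapply id_add; [exact hT|exact Hub| |]; auto. apply id_mulr; auto. }
  assert (Tuv : T (hmul R u v)).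
  { eapply id_add; [exact hT|exact Huv| |]; auto. apply id_mul; auto. }
  assert (Pub : phi T (hmul R u b)).
  { eapply id_add; [exact Hp|exact Hub| |]; auto. rewrite hmul_comm; auto. }
  assert (Nuy : ~ phi T (hmul R u y)).
  { intro H. apply N. eapply id_canc; [exact Hp|exact Huy| |]; auto. }
  assert (Nuv : ~ phi T (hmul R u v)).
  { intro H. apply Nuy. eapply id_canc; [exact Hp|exact Huv| |]; auto. }
  destruct (hpr _ _ Tuv Nuv) as [h|h].
  - apply Ha. eapply id_canc; [exact hT| |exact Hx|exact h].
    apply hplus_comm; exact Hu.
  - apply Hb. eapply id_canc; [exact hT| |exact Hy|exact h].
    apply hplus_comm; exact Hv.
Qed.

Lemma findk a : ~ T a -> forall n, T (hpow a n) ->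
  exists k, T (hmul R a (hpow a k)) /\ ~ T (hpow a k).
Proof.
  intros Ha n. induction n as [|n IH]; simpl; intros Hn.
  - exfalso. apply Ha. rewrite <- (hmul_one R a), hmul_comm. apply id_mul; auto.
  - destruct (classic (T (hpow a n))) as [h|h]; auto. exists n; auto.
Qed.
End H.

Theorem mainTheorem8 (R : KrasnerHyperring)
  (phi : (R -> Prop) -> (R -> Prop)) (T : R -> Prop) :
  phi_map phi ->
  hyperideal T -> proper T ->
  subset (phi T) T ->
  phi_prime phi T -> ~ prime_hi T ->
  forall t a, T t -> hrad (phi T) a -> phi T (hmul R t a).
Proof.
  intros hphi hT _ hsub hpr hnp t a Ht [n [_ Hn]].
  destruct (classic (T a)) as [Ha|Ha].
  - apply NNPP; intro N. apply hnp. intros x y Hxy.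
    apply NNPP; intro M. apply N.
    eapply sq with (a:=x) (b:=y); eauto; tauto.
  - destruct (findk hT a Ha n (hsub _ Hn)) as [k [Hk1 Hk2]].
    destruct (lemA hphi hT hpr a (hpow a k) Hk1 Ha Hk2) as [_ H].
    rewrite hmul_comm; auto.
Qed.
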